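(* Let $d\ge3$ and $n=d+1$. The maximum size of a family $\mathcal{A}\subset2^{[n]}$ with $\mathrm{VC}(\mathcal{A}\cap\mathcal{A})\le d$ and $\mathrm{VC}(\mathcal{A}\cup\mathcal{A})\le d$ is $2^n-2$.
   Context: $[n]=\{1,\dots,n\}$. $\mathrm{VC}(\mathcal{F})$ is the largest cardinality of a $Y\subset[n]$ with $\{S\cap Y:S\in\mathcal{F}\}=2^Y$. $\mathcal{A}\cap\mathcal{A}=\{S\cap T:S,T\in\mathcal{A}\}$ and $\mathcal{A}\cup\mathcal{A}=\{S\cup T:S,T\in\mathcal{A}\}$. *)

(* Defs.v *)
From mathcomp Require Import all_boot.
Set Implicit Arguments. Unset Strict Implicit. Unset Printing Implicit Defensive.

Definition shatters (n : nat) (F : {set {set 'I_n}}) (Y : {set 'I_n}) : bool :=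
  [set S :&: Y | S in F] == powerset Y.

Definition VC (n : nat) (F : {set {set 'I_n}}) : nat :=
  \max_(Y : {set 'I_n} | shatters F Y) #|Y|.

Definition fam_cap (n : nat) (A : {set {set 'I_n}}) : {set {set 'I_n}} :=
  [set S :&: T | S in A, T in A].
Definition fam_cup (n : nat) (A : {set {set 'I_n}}) : {set {set 'I_n}} :=
  [set S :|: T | S in A, T in A].

(* Main.v *)
Require Import Defs.
From mathcomp Require Import all_boot.

Lemma card_fam (n : nat) : #|[set: {set 'I_n}]| = 2 ^ n.
Proof. by rewrite -powersetT card_powerset cardsT card_ord. Qed.

Lemma shatT (n : nat) (F : {set {set 'I_n}}) : shatters F setT = (F == setT).
Proof.
rewrite /shatters powersetT.
have -> : [set S :&: setT | S in F] = F.
  by rewrite (eq_imset _ (fun S => setIT S)) imset_id.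
by [].
Qed.

Lemma VC_le (d : nat) (F : {set {set 'I_d.+1}}) : (VC F <= d) = (F != setT).
Proof.
apply/idP/idP.
- move=> H; apply/negP => /eqP FT.
  have : #|[set: 'I_d.+1]| <= VC F.
    by apply: (leq_bigmax_cond (P := fun Y => shatters F Y)); rewrite shatT FT.
  by rewrite cardsT card_ord => /(leq_trans) /(_ H); rewrite ltnn.
- move=> FT; apply/bigmax_leqP => Y shY.
  have := max_card Y; rewrite card_ord leq_eqVlt ltnS; case/orP => // /eqP cY.
  have YT : Y = setT.
    apply/eqP; rewrite eqEcard subsetT /= cardsT card_ord cY //.
  by move: shY; rewrite YT shatT (negbTE FT).
Qed.

Lemma two_missing (n : nat) (A : {set {set 'I_n}}) X Z :
  X != Z -> X \notin A -> Z \notin A -> #|A| <= 2 ^ n - 2.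
Proof.
move=> XZ XA ZA.
have sub : A \subset ~: [set X; Z].
  apply/subsetP => S SA; rewrite !inE; apply/negP => /orP [] /eqP E.
  - by move: XA; rewrite -E SA.
  - by move: ZA; rewrite -E SA.
have E : #|~: [set X; Z]| = 2 ^ n - 2.
  by move: (cardsC [set X; Z]); rewrite cards2 XZ -card_fam cardsT => <-; rewrite addKn.
by rewrite -E subset_leq_card.
Qed.

Lemma core (n : nat) (A : {set {set 'I_n}}) (X : {set 'I_n}) :
  2 < n -> (forall Z, Z != X -> Z \in A) ->
  (X \in fam_cap A) || (X \in fam_cup A).
Proof.
move=> n3 HA.
have [c2|c1] := ltnP 1 #|~: X|.
- case/card_gt1P: c2 => i [j [iX jX ij]].
  move: iX jX; rewrite !inE => iX jX.
  apply/orP; left.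
  have -> : X = (i |: X) :&: (j |: X).
    apply/setP => z; rewrite !inE; case zX: (z \in X); rewrite ?orbT //=.
    case: (z =P i) => //= zi; case: (z =P j) => //= zj.
    by move: ij; rewrite -zi -zj eqxx.
  apply: imset2_f; apply: HA; apply/negP => /eqP E.
  + by move: iX; rewrite -E !inE eqxx.
  + by move: jX; rewrite -E !inE eqxx.
- have c2 : 1 < #|X|.
    move: (cardsC X); rewrite card_ord => E.
    rewrite -(ltn_add2r #|~: X|) E; apply: (leq_trans _ n3); rewrite ltnS.
    by rewrite -[2]/(1+1) leq_add2l.
  case/card_gt1P: c2 => a [b [aX bX ab]].
  apply/orP; right.
  have -> : X = (X :\ a) :|: (X :\ b).
    apply/setP => z; rewrite !inE; case zX: (z \in X); rewrite ?andbF ?orbF //=.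
    case: (z =P a) => //= za; case: (z =P b) => //= zb.
    by move: ab; rewrite -za -zb eqxx.
  apply: imset2_f; apply: HA; apply/negP => /eqP E.
  + by move: aX; rewrite -E !inE eqxx.
  + by move: bX; rewrite -E !inE eqxx.
Qed.

Theorem mainTheorem10 (d : nat) (hd : 3 <= d) :
  let n := d.+1 in
  (exists A : {set {set 'I_n}},
      [/\ VC (fam_cap A) <= d, VC (fam_cup A) <= d & #|A| = 2 ^ n - 2]) /\
  (forall A : {set {set 'I_n}},
      VC (fam_cap A) <= d -> VC (fam_cup A) <= d -> #|A| <= 2 ^ n - 2).
Proof.
move=> n; split.
- exists (~: [set set0; setT]); split.
  + rewrite VC_le; apply/negP => /eqP E.
    have : [set: 'I_n] \in fam_cap (~: [set set0; setT]) by rewrite E inE.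
    case/imset2P => S T; rewrite !inE => /norP [_ ST] /norP [_ _] E'.
    move: ST; have : setT \subset S by rewrite E' subsetIl.
    by rewrite subTset => ->.
  + rewrite VC_le; apply/negP => /eqP E.
    have : (set0 : {set 'I_n}) \in fam_cup (~: [set set0; setT]) by rewrite E inE.
    case/imset2P => S T; rewrite !inE => /norP [S0 _] /norP [_ _] /esym /eqP.
    by rewrite setU_eq0 => /andP [/eqP S0' _]; move: S0; rewrite S0' eqxx.
  + have : #|[set (set0 : {set 'I_n}); setT]| = 2.
      rewrite cards2; case: eqP => // /setP /(_ ord0); rewrite !inE.
      by [].
    move: (cardsC [set (set0 : {set 'I_n}); setT]); rewrite -card_fam cardsT => <- ->.
    by rewrite addKn.
- move=> A; rewrite !VC_le => Hc Hu.
  have [X XA] : exists X, X \notin fam_cap A.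
    apply/existsP; move: Hc; apply: contraR; rewrite negb_exists => /forallP H.
    by apply/eqP/setP => X; rewrite inE; move: (H X); rewrite negbK.
  have [Y YA] : exists Y, Y \notin fam_cup A.
    apply/existsP; move: Hu; apply: contraR; rewrite negb_exists => /forallP H.
    by apply/eqP/setP => W; rewrite inE; move: (H W); rewrite negbK.
  have XA' : X \notin A.
    by apply: contra XA => XA; apply/imset2P; exists X X => //; rewrite setIid.
  have YA' : Y \notin A.
    by apply: contra YA => YA; apply/imset2P; exists Y Y => //; rewrite setUid.
  have [XY|XY] := eqVneq X Y; last exact: two_missing XY XA' YA'.
  subst Y.
  case: (boolP [forall Z, (Z != X) ==> (Z \in A)]) => [/forallP H|].
  + have H' : forall Z, Z != X -> Z \in A by move=> Z ZX; move: (H Z); rewrite ZX.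
    by move: (@core n A X (ltnW hd) H'); rewrite (negbTE XA) (negbTE YA).
  + rewrite negb_forall => /existsP [Z]; rewrite negb_imply => /andP [ZX ZA].
    exact: (@two_missing n A Z X ZX ZA XA').
Qed.
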